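(* Let $\lambda>0$ and let $q_1,\dots,q_n>0$. For a permutation $\pi$ of $\{1,\dots,n\}$ consider the power profile $p_\ell=q_{\pi(\ell)}$ and $$\gamma(\pi)=\min_{\ell=1,\dots,n}\frac{p_\ell}{1+\lambda\sum_{j=\ell+1}^np_j}.$$ Then $\gamma(\pi)$ is maximized over all permutations $\pi$ by any $\pi$ for which $p_1\ge p_2\ge\dots\ge p_n$. *)

(* Defs.v *)
From HB Require Import structures.
From mathcomp Require Import all_boot all_order all_algebra all_fingroup.
Set Implicit Arguments. Unset Strict Implicit. Unset Printing Implicit Defensive.
Import Order.TTheory GRing.Theory Num.Theory.
Local Open Scope ring_scope.

(* Power profile p_l = q_(pi l), positions indexed by 'I_n.+1 (0-based). *)
Definition profile (R : realFieldType) (n : nat) (q : 'I_n.+1 -> R)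
  (pi : 'S_n.+1) : 'I_n.+1 -> R := fun l => q (pi l).

Definition ratio (R : realFieldType) (n : nat) (lam : R) (p : 'I_n.+1 -> R)
  (l : 'I_n.+1) : R :=
  p l / (1 + lam * \sum_(j < n.+1 | (l < j)%N) p j).

(* gamma(pi) = min over l of the ratio; the index set is nonempty, so we fold
   Num.min starting from the ratio at position 0. *)
Definition gamma (R : realFieldType) (n : nat) (lam : R) (q : 'I_n.+1 -> R)
  (pi : 'S_n.+1) : R :=
  \big[Num.min/ratio lam (profile q pi) ord0]_(l < n.+1)
     ratio lam (profile q pi) l.

(* Main.v *)
Require Import Defs.
From HB Require Import structures.
From mathcomp Require Import all_boot all_order all_algebra all_fingroup.
Import Order.TTheory GRing.Theory Num.Theory.
Local Open Scope ring_scope.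

Lemma sum_ratio_reindex (R : realFieldType) (n : nat) (q : 'I_n.+1 -> R)
  (s : 'S_n.+1) (l : 'I_n.+1) :
  \sum_(j < n.+1 | (l < j)%N) q (s j) = \sum_(x < n.+1 | (l < (s^-1)%g x)%N) q x.
Proof.
rewrite [RHS](reindex_inj (@perm_inj _ s)) /=.
by apply: eq_bigl => j; rewrite permK.
Qed.

Theorem mainTheorem5 (R : realFieldType) (n : nat) (lam : R)
  (q : 'I_n.+1 -> R) (hlam : 0 < lam) (hq : forall i, 0 < q i)
  (pi : 'S_n.+1)
  (hsorted : forall l l' : 'I_n.+1, (l <= l')%N -> q (pi l') <= q (pi l)) :
  forall sigma : 'S_n.+1, gamma lam q sigma <= gamma lam q pi.
Proof.
move=> sigma.
have key : forall l : 'I_n.+1, gamma lam q sigma <= Defs.ratio lam (profile q pi) l.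
  move=> l.
  pose P := fun k : 'I_n.+1 => (l <= (pi^-1)%g (sigma k))%N.
  have P0 : P ((sigma^-1)%g (pi l)) by rewrite /P permKV permK.
  case: (arg_minnP (fun k : 'I_n.+1 => nat_of_ord k) P0) => l' Pl' minl'.
  set b := sigma l'.
  have hb : q b <= q (pi l).
    by have := hsorted _ _ Pl'; rewrite /b permKV.
  have hmin : forall x, (l <= (pi^-1)%g x)%N -> x != b -> (l' < (sigma^-1)%g x)%N.
    move=> x hx hxb.
    have h1 : (l' <= (sigma^-1)%g x)%N by apply: minl'; rewrite /P permKV.
    rewrite ltn_neqAle h1 andbT; apply/eqP => /val_inj E.
    by move: hxb; rewrite /b E permKV eqxx.
  have hS : \sum_(x < n.+1 | (l < (pi^-1)%g x)%N) q x
            <= \sum_(x < n.+1 | (l' < (sigma^-1)%g x)%N) q x.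
    have pos x : 0 <= q x by apply: ltW.
    case Pb: (l < (pi^-1)%g b)%N.
    - rewrite (bigD1 b) //= [X in _ <= X](bigD1 (pi l)) /=; last first.
        apply: hmin; first by rewrite permK.
        apply/eqP => E; move: Pb; by rewrite -E permK ltnn.
      apply: lerD => //.
      rewrite big_mkcond [X in _ <= X]big_mkcond /=.
      apply: ler_sum => x _.
      case: ifP => [/andP [hx hxb]|_]; last by case: ifP.
      rewrite ifT ?lexx //; apply/andP; split.
        by apply: hmin => //; apply: ltnW.
      by apply/eqP => E; move: hx; rewrite E permK ltnn.
    - rewrite big_mkcond [X in _ <= X]big_mkcond /=.
      apply: ler_sum => x _.
      case: ifP => [hx|_]; last by case: ifP.
      rewrite ifT ?lexx //; apply: hmin; first exact: ltnW.
      by apply/eqP => E; move: hx; rewrite E Pb.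
  have gle : gamma lam q sigma <= Defs.ratio lam (profile q sigma) l'.
    rewrite /gamma (bigD1 l') //= ge_min lexx //.
  apply: (le_trans gle).
  rewrite /Defs.ratio /profile !sum_ratio_reindex.
  set S := \sum_(x < n.+1 | (l < (pi^-1)%g x)%N) q x in hS *.
  set S' := \sum_(x < n.+1 | (l' < (sigma^-1)%g x)%N) q x in hS *.
  have S0 : 0 <= S by apply: sumr_ge0 => x _; apply: ltW.
  have D0 : 0 < 1 + lam * S by apply: ltr_pwDl => //; apply: mulr_ge0 => //; apply: ltW.
  have D0' : 0 < 1 + lam * S' by apply: (lt_le_trans D0); rewrite lerD2l ler_wpM2l // ltW.
  apply: ler_pM => //.
  - by apply: ltW.
  - by rewrite invr_ge0 ltW.
  - rewrite lef_pV2 ?posrE //.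
    by rewrite lerD2l ler_wpM2l // ltW.
rewrite /gamma.
apply: (big_ind (fun x => gamma lam q sigma <= x)) => //.
by move=> x y hx hy; rewrite le_min hx hy.
Qed.
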